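(* There exist finite constants $M_{t,j}\ge 0$ ($t\in\mathcal T$, $j=1,2$), depending only on the multilinear program and not on $\hat v$, such that for every indicator vector $\hat v\in\{0,1\}^{\mathcal T}$ of a proper triple set and every optimal solution $(\lambda,\mu)$ of the linear program $\mathrm{D}(\hat v)$ with $\lambda_{t,1}=\lambda_{t,2}=\lambda_{t,3}=0$ for every $t$ with $\hat v_t=0$, we have $\lambda_{t,j}\le M_{t,j}$ for all $t\in\mathcal T$ and $j=1,2$.
   Context: A multilinear program has data $n,m$, coefficients $\alpha_i\in\mathbb{R}$ and nonempty index sets $J_i\subseteq[n]$. Let $\mathcal N=\bigcup_i\{J:\emptyset\ne J\subseteq J_i\}$ and $\beta_J=\sum_{i:J_i=J}\alpha_i$. A triple is $t=(J,J',J'')$ with $J''\in\mathcal N$, $|J''|\ge2$, $J,J'$ nonempty, disjoint, $J\cup J'=J''$, listed with $J,J'$ in lexicographic order; $\mathsf{tail1}(t)=J$, $\mathsf{tail2}(t)=J'$, $\mathsf{head}(t)=J''$; $\mathcal T$ is the set of all triples. A proper triple set is a set $T\subseteq\mathcal T$ containing a subset $T'$ such that (1) every $J_i$ with $|J_i|>1$ is the head of some triple in $T'$, and (2) whenever a set $J$ with $|J|>1$ is the first or second element of a triple in $T'$, $J$ is the head of a different triple in $T'$; its indicator vector has $\hat v_t=1$ iff $t\in T$. $\mathrm{D}(\hat v)$: maximize $-\sum_{t\in\mathcal T}[(1-\hat v_t)(\lambda_{t,1}+\lambda_{t,2})+(2-\hat v_t)\lambda_{t,3}]-\sum_{J\in\mathcal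 N}\mu_J$ over $\lambda\ge0,\mu\ge0$ subject to, for every $J\in\mathcal N$, $\beta_J+\sum_{t:\mathsf{tail1}(t)=J}(-\lambda_{t,1}+\lambda_{t,3})+\sum_{t:\mathsf{tail2}(t)=J}(-\lambda_{t,2}+\lambda_{t,3})+\sum_{t:\mathsf{head}(t)=J}(\lambda_{t,1}+\lambda_{t,2}-\lambda_{t,3})+\mu_J\ge0$. *)

(* Defs.v *)
From HB Require Import structures.
From mathcomp Require Import all_boot all_order all_algebra.
From mathcomp Require Import reals.
Set Implicit Arguments. Unset Strict Implicit. Unset Printing Implicit Defensive.
Import Order.TTheory GRing.Theory Num.Theory.
Local Open Scope ring_scope.

(* A multilinear program is given by n, m, alpha : 'I_m -> R and
   index sets Js : 'I_m -> {set 'I_n} (assumed nonempty in the theorem). *)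

Definition T3 (n : nat) : finType := ({set 'I_n} * {set 'I_n} * {set 'I_n})%type.
Definition tail1 n (t : T3 n) : {set 'I_n} := t.1.1.
Definition tail2 n (t : T3 n) : {set 'I_n} := t.1.2.
Definition head  n (t : T3 n) : {set 'I_n} := t.2.

Definition inN n m (Js : 'I_m -> {set 'I_n}) (J : {set 'I_n}) : bool :=
  (J != set0) && [exists i, J \subset Js i].

Definition beta (R : ringType) n m (alpha : 'I_m -> R) (Js : 'I_m -> {set 'I_n})
  (J : {set 'I_n}) : R := \sum_(i | Js i == J) alpha i.

Fixpoint lexlt_seq (s t : seq nat) : bool :=
  match s, t with
  | [::], [::] => false
  | [::], _ :: _ => true
  | _ :: _, [::] => false
  | x :: s', y :: t' => (x < y)%N || ((x == y) && lexlt_seq s' t')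
  end.

Definition lexlt n (J J' : {set 'I_n}) : bool :=
  lexlt_seq (sort leq [seq val x | x <- enum J]) (sort leq [seq val x | x <- enum J']).

Definition is_triple n m (Js : 'I_m -> {set 'I_n}) (t : T3 n) : bool :=
  [&& inN Js (head t), (1 < #|head t|)%N, tail1 t != set0, tail2 t != set0,
      [disjoint tail1 t & tail2 t], tail1 t :|: tail2 t == head t
    & lexlt (tail1 t) (tail2 t)].

Definition proper_triple_set n m (Js : 'I_m -> {set 'I_n}) (T : {set T3 n}) : Prop :=
  (forall t, t \in T -> is_triple Js t) /\
  exists T' : {set T3 n}, T' \subset T /\
    (forall i, (1 < #|Js i|)%N -> exists2 t, t \in T' & head t = Js i) /\
    (forall t, t \in T' -> forall J, (J = tail1 t \/ J = tail2 t) -> (1 < #|J|)%N ->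
        exists2 t', t' \in T' & t' != t /\ head t' = J).

Definition vhat (R : ringType) n (T : {set T3 n}) (t : T3 n) : R := (t \in T)%:R.

(* the dual LP D(vhat): lam t j with j = 0,1,2 standing for lambda_{t,1..3} *)
Section Dual.
Variables (R : realFieldType) (n m : nat) (alpha : 'I_m -> R) (Js : 'I_m -> {set 'I_n}).

Definition j1 : 'I_3 := @Ordinal 3 0 isT.
Definition j2 : 'I_3 := @Ordinal 3 1 isT.
Definition j3 : 'I_3 := @Ordinal 3 2 isT.

Definition D_feasible (lam : T3 n -> 'I_3 -> R) (mu : {set 'I_n} -> R) : Prop :=
  (forall t, is_triple Js t -> forall j, 0 <= lam t j) /\
  (forall J, inN Js J -> 0 <= mu J) /\
  (forall J, inN Js J ->
     0 <= beta alpha Js J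
        + \sum_(t | is_triple Js t && (tail1 t == J)) (- lam t j1 + lam t j3)
        + \sum_(t | is_triple Js t && (tail2 t == J)) (- lam t j2 + lam t j3)
        + \sum_(t | is_triple Js t && (head t == J)) (lam t j1 + lam t j2 - lam t j3)
        + mu J).

Definition D_obj (v : T3 n -> R) (lam : T3 n -> 'I_3 -> R) (mu : {set 'I_n} -> R) : R :=
  - (\sum_(t | is_triple Js t)
        ((1 - v t) * (lam t j1 + lam t j2) + (2 - v t) * lam t j3))
  - \sum_(J | inN Js J) mu J.

Definition D_optimal (v : T3 n -> R) lam mu : Prop :=
  D_feasible lam mu /\
  forall lam' mu', D_feasible lam' mu' -> D_obj v lam' mu' <= D_obj v lam mu.
End Dual.

(* Main.v *)
Require Import Defs.
From HB Require Import structures.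
From mathcomp Require Import all_boot all_order all_algebra.
From mathcomp Require Import reals.
From mathcomp Require Import zify ring lra.
Import Order.TTheory GRing.Theory Num.Theory.
Local Open Scope ring_scope.

Lemma triple_facts n m (Js : 'I_m -> {set 'I_n}) t : is_triple Js t ->
  [/\ inN Js (Defs.head t), inN Js (tail1 t), inN Js (tail2 t),
      (#|tail1 t| < #|Defs.head t|)%N & (#|tail2 t| < #|Defs.head t|)%N].
Proof.
case/and5P => hN h1 n1 n2 /and3P [dj /eqP U _].
have hN' := hN; case/andP: hN' => _ /existsP [i hi].
have s1: tail1 t \subset Defs.head t by rewrite -U subsetUl.
have s2: tail2 t \subset Defs.head t by rewrite -U subsetUr.
have c: #|Defs.head t| = (#|tail1 t| + #|tail2 t|)%N.
  by rewrite -U cardsU (disjoint_setI0 dj) cards0 subn0.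
have g1 : (0 < #|tail1 t|)%N by rewrite card_gt0.
have g2 : (0 < #|tail2 t|)%N by rewrite card_gt0.
split => //.
- by rewrite /inN n1 /=; apply/existsP; exists i; exact: subset_trans s1 hi.
- by rewrite /inN n2 /=; apply/existsP; exists i; exact: subset_trans s2 hi.
- rewrite c; lia.
- rewrite c; lia.
Qed.

Lemma sub_sum (R : realFieldType) (T : finType) (P Q : pred T) (f : T -> R) :
  (forall t, P t -> 0 <= f t) -> \sum_(t | P t && Q t) f t <= \sum_(t | P t) f t.
Proof.
move=> hf; rewrite big_mkcondr /=; apply: ler_sum => t Pt.
by case: ifP => _ //; exact: hf.
Qed.

Lemma reindex_w (R : realFieldType) n m (Js : 'I_m -> {set 'I_n})
  (g : T3 n -> {set 'I_n}) (w : {set 'I_n} -> R) (F : T3 n -> R) :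
  (forall t, is_triple Js t -> inN Js (g t)) ->
  \sum_(J | inN Js J) w J * \sum_(t | is_triple Js t && (g t == J)) F t
  = \sum_(t | is_triple Js t) w (g t) * F t.
Proof.
move=> hg; rewrite (partition_big g (inN Js)) //=.
apply: eq_bigr => J _; rewrite mulr_sumr; apply: eq_bigr => t /andP[_ /eqP ->].
by [].
Qed.

Lemma w_diff (R : realFieldType) (n a b : nat) : (a < b)%N ->
  1 <= (n%:R - a%:R) - (n%:R - b%:R) :> R.
Proof.
move=> h; have : (a.+1)%:R <= b%:R :> R by rewrite ler_nat.
rewrite -addn1 natrD; lra.
Qed.

Lemma w_ge0 (R : realFieldType) n (J : {set 'I_n}) : 0 <= n%:R - #|J|%:R :> R.
Proof.
have := max_card J; rewrite card_ord => h.
have : #|J|%:R <= n%:R :> R by rewrite ler_nat.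
lra.
Qed.

Theorem lemma5 (R : realType) (n m : nat) (alpha : 'I_m -> R)
    (Js : 'I_m -> {set 'I_n}) (HJ : forall i, Js i != set0) :
  exists M1 M2 : T3 n -> R,
    (forall t, 0 <= M1 t /\ 0 <= M2 t) /\
    forall T : {set T3 n}, proper_triple_set Js T ->
    forall (lam : T3 n -> 'I_3 -> R) (mu : {set 'I_n} -> R),
      D_optimal alpha Js (vhat R T) lam mu ->
      (forall t, is_triple Js t -> t \notin T -> forall j, lam t j = 0) ->
      forall t, is_triple Js t -> lam t j1 <= M1 t /\ lam t j2 <= M2 t.
Proof.
pose b := beta alpha Js.
pose C := \sum_(J | inN Js J) Num.max 0 (- b J).
pose A := \sum_(J | inN Js J) `|b J|.
pose E := A + C + C + C.
pose w (J : {set 'I_n}) : R := n%:R - #|J|%:R.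
pose K := \sum_(J | inN Js J) w J * E.
have C0 : 0 <= C by apply: sumr_ge0 => J _; rewrite le_max lexx.
have A0 : 0 <= A by apply: sumr_ge0 => J _; rewrite normr_ge0.
have E0 : 0 <= E by rewrite /E; lra.
have K0 : 0 <= K by apply: sumr_ge0 => J _; apply: mulr_ge0 => //; exact: w_ge0.
exists (fun _ => K), (fun _ => K); split => // T _ lam mu [feas opt] _ t0 tr0.
have [lam0 [mu0 cons]] := feas.
pose tr := is_triple Js.
have HS : \sum_(t | tr t) lam t j3 + \sum_(J | inN Js J) mu J <= C.
  pose mu' J := Num.max 0 (- b J).
  have f0 : D_feasible alpha Js (fun _ _ => 0) mu'.
    split; first by [].
    split; first by move=> J _; rewrite le_max lexx.
    move=> J _; rewrite !big1 ?addr0; first last.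
    - by move=> t _; rewrite ?addr0 ?subr0 ?oppr0 ?addr0.
    - by move=> t _; rewrite ?addr0 ?subr0 ?oppr0 ?addr0.
    - by move=> t _; rewrite ?addr0 ?subr0 ?oppr0 ?addr0.
    rewrite -/(b J) /mu'; case: (lerP 0 (- b J)) => h; rewrite ?max_r ?max_l; try lra.
  have := opt _ _ f0.
  have -> : D_obj Js (vhat R T) (fun _ _ => 0) mu' = - C.
    by rewrite /D_obj big1 ?oppr0 ?sub0r // => t _; rewrite !addr0 !mulr0 addr0.
  have : \sum_(t | tr t) lam t j3 <= \sum_(t | is_triple Js t)
        ((1 - vhat R T t) * (lam t j1 + lam t j2) + (2 - vhat R T t) * lam t j3).
    apply: ler_sum => t trt.
    have := lam0 t trt j1; have := lam0 t trt j2; have := lam0 t trt j3.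
    rewrite /vhat; case: (t \in T) => /=; rewrite ?mulr1n ?mulr0n; lra.
  rewrite /D_obj; lra.
pose o1 J := \sum_(t | is_triple Js t && (tail1 t == J)) lam t j1.
pose o2 J := \sum_(t | is_triple Js t && (tail2 t == J)) lam t j2.
pose iJ J := \sum_(t | is_triple Js t && (Defs.head t == J)) (lam t j1 + lam t j2).
have L3 : \sum_(t | tr t) lam t j3 >= 0 by apply: sumr_ge0 => t h; exact: lam0.
have LM : \sum_(J | inN Js J) mu J >= 0 by apply: sumr_ge0 => J h; exact: mu0.
have HJb : forall J, inN Js J -> o1 J + o2 J - iJ J <= E.
  move=> J hJ; have := cons J hJ.
  have e1 : \sum_(t | is_triple Js t && (tail1 t == J)) (- lam t j1 + lam t j3)
    = - o1 J + \sum_(t | is_triple Js t && (tail1 t == J)) lam t j3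
    by rewrite big_split /= sumrN.
  have e2 : \sum_(t | is_triple Js t && (tail2 t == J)) (- lam t j2 + lam t j3)
    = - o2 J + \sum_(t | is_triple Js t && (tail2 t == J)) lam t j3
    by rewrite big_split /= sumrN.
  have e3 : \sum_(t | is_triple Js t && (Defs.head t == J)) (lam t j1 + lam t j2 - lam t j3)
    = iJ J - \sum_(t | is_triple Js t && (Defs.head t == J)) lam t j3
    by rewrite big_split /= sumrN.
  rewrite e1 e2 e3.
  have s1 := @sub_sum R _ (is_triple Js) (fun t => tail1 t == J) (fun t => lam t j3) (fun t h => lam0 t h j3).
  have s2 := @sub_sum R _ (is_triple Js) (fun t => tail2 t == J) (fun t => lam t j3) (fun t h => lam0 t h j3).
  have s3 : 0 <= \sum_(t | is_triple Js t && (Defs.head t == J)) lam t j3.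
    by apply: sumr_ge0 => t /andP[h _]; exact: lam0.
  have hm : mu J <= \sum_(J | inN Js J) mu J.
    by rewrite (bigD1 J) //= lerDl; apply: sumr_ge0 => J' /andP[h _]; exact: mu0.
  have hb : b J <= A.
    rewrite /A (bigD1 J) //=; apply: le_trans (ler_norm _) _.
    by rewrite lerDl; apply: sumr_ge0 => J' _; exact: normr_ge0.
  rewrite -/(b J) /E; move: s1 s2 => /= s1 s2; lra.
have F1 : forall t, is_triple Js t -> inN Js (tail1 t) by move=> t /triple_facts[].
have F2 : forall t, is_triple Js t -> inN Js (tail2 t) by move=> t /triple_facts[].
have F3 : forall t, is_triple Js t -> inN Js (Defs.head t) by move=> t /triple_facts[].
have W : \sum_(t | is_triple Js t) ((w (tail1 t) - w (Defs.head t)) * lam t j1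
          + (w (tail2 t) - w (Defs.head t)) * lam t j2) <= K.
  have -> : \sum_(t | is_triple Js t) ((w (tail1 t) - w (Defs.head t)) * lam t j1
          + (w (tail2 t) - w (Defs.head t)) * lam t j2) =
     \sum_(J | inN Js J) w J * o1 J + \sum_(J | inN Js J) w J * o2 J
       - \sum_(J | inN Js J) w J * iJ J.
    rewrite /o1 /o2 /iJ (@reindex_w R n m Js (@tail1 n) w (fun t => lam t j1) F1)
      (@reindex_w R n m Js (@tail2 n) w (fun t => lam t j2) F2)
      (@reindex_w R n m Js (@Defs.head n) w (fun t => lam t j1 + lam t j2) F3).
    rewrite -sumrN -!big_split /=; apply: eq_bigr => t _; ring.
  rewrite -sumrN -!big_split /=; apply: ler_sum => J hJ.
  rewrite -mulrDr -mulrBr; apply: ler_wpM2l; [exact: w_ge0 | exact: HJb].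
have [_ _ _ c1 c2] := @triple_facts n m Js t0 tr0.
have d1 := @w_diff R n _ _ c1; have d2 := @w_diff R n _ _ c2.
have P0 : 0 <= \sum_(t | is_triple Js t && (t != t0)) ((w (tail1 t) - w (Defs.head t)) * lam t j1
          + (w (tail2 t) - w (Defs.head t)) * lam t j2).
  apply: sumr_ge0 => t /andP[h _].
  have [_ _ _ e1 e2] := @triple_facts n m Js t h.
  have g1 := @w_diff R n _ _ e1; have g2 := @w_diff R n _ _ e2.
  have := lam0 t h j1; have := lam0 t h j2; rewrite /w; nra.
move: W; rewrite (bigD1 t0) //=.
have := lam0 t0 tr0 j1; have := lam0 t0 tr0 j2; rewrite /w; nra.
Qed.
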